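(* Let $\mathcal{R}$ be a commutative ring with unity, $P$ a locally finite poset and $b$ an additive biderivation of $I(P,\mathcal{R})$. For any $x<y<z$ in $P$: (1) $b_{xy}(e_{xy},e_{xx})=b_{yz}(e_{yz},e_{yy})=b_{xz}(e_{xz},e_{xx})$; (2) $b_{xy}(e_{xx},e_{xy})=b_{yz}(e_{yy},e_{yz})=b_{xz}(e_{xx},e_{xz})$.
   Context: $I(P,\mathcal{R})$ is the incidence algebra: functions $f:P\times P\to\mathcal{R}$ with $f(x,y)=0$ unless $x\le y$, with product $(fg)(x,y)=\sum_{x\le z\le y}f(x,z)g(z,y)$; $e_{xy}$ ($x\le y$) is the function equal to $1$ at $(x,y)$ and $0$ elsewhere. An additive biderivation is a map $b$ of two arguments, additive in each, with $b(\alpha\beta,\gamma)=\alpha b(\beta,\gamma)+b(\alpha,\gamma)\beta$ and $b(\alpha,\beta\gamma)=\beta b(\alpha,\gamma)+b(\alpha,\beta)\gamma$. Write $b_{pq}(\alpha,\beta)=b(\alpha,\beta)(p,q)$. *)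

(* Defs.v *)
From HB Require Import structures.
From mathcomp Require Import all_boot all_order all_algebra.
Set Implicit Arguments. Unset Strict Implicit. Unset Printing Implicit Defensive.
Import Order.TTheory GRing.Theory.
Local Open Scope ring_scope.

Definition locally_finite_enum (d : Order.disp_t) (P : porderType d)
  (itv : P -> P -> seq P) : Prop :=
  forall x y : P, uniq (itv x y) /\
    forall z : P, (z \in itv x y) = ((x <= z)%O && (z <= y)%O).

Section Incidence.
Variables (d : Order.disp_t) (P : porderType d) (R : comNzRingType)
  (itv : P -> P -> seq P).

Definition incidence (f : P -> P -> R) : Prop :=
  forall x y : P, ~~ (x <= y)%O -> f x y = 0.

Definition inc_add (f g : P -> P -> R) : P -> P -> R :=
  fun x y => f x y + g x y.

(* Convolution product (fg)(x,y) = sum_{x <= z <= y} f(x,z) g(z,y);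
   the interval is empty unless x <= y, so the sum is 0 then. *)
Definition inc_mul (f g : P -> P -> R) : P -> P -> R :=
  fun x y => \sum_(z <- itv x y) f x z * g z y.

Definition inc_e (x y : P) : P -> P -> R :=
  fun u v => if (u == x) && (v == y) then 1 else 0.

Definition is_biderivation
  (b : (P -> P -> R) -> (P -> P -> R) -> (P -> P -> R)) : Prop :=
  [/\ (forall f g, incidence f -> incidence g -> incidence (b f g)),
      (forall f g h, incidence f -> incidence g -> incidence h ->
         b (inc_add f g) h = inc_add (b f h) (b g h)),
      (forall f g h, incidence f -> incidence g -> incidence h ->
         b f (inc_add g h) = inc_add (b f g) (b f h)),
      (forall f g h, incidence f -> incidence g -> incidence h ->
         b (inc_mul f g) h = inc_add (inc_mul f (b g h)) (inc_mul (b f h) g))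
    & (forall f g h, incidence f -> incidence g -> incidence h ->
         b f (inc_mul g h) = inc_add (inc_mul g (b f h)) (inc_mul (b f g) h))].

End Incidence.

(* Main.v *)
Require Import Defs.
From HB Require Import structures.
From mathcomp Require Import all_boot all_order all_algebra.
From mathcomp Require Import ring.
From Stdlib Require Import FunctionalExtensionality.
Set Implicit Arguments. Unset Strict Implicit.
Import Order.TTheory GRing.Theory.
Local Open Scope ring_scope.

Section Aux.
Variables (d : Order.disp_t) (P : porderType d) (R : comNzRingType)
  (itv : P -> P -> seq P) (Hlf : locally_finite_enum itv).

Local Notation e := (@inc_e d P R).

Lemma inc_e_inc (u v : P) : (u <= v)%O -> incidence (e u v).
Proof.
move=> Huv a c; rewrite /inc_e; case: eqP => [->|_]; case: eqP => [->|_] //=.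
by rewrite Huv.
Qed.

Lemma inc0 : incidence (fun _ _ : P => (0 : R)).
Proof. by []. Qed.

Lemma e_mul_l (u v w : P) (G : P -> P -> R) :
  (u <= v)%O -> (v <= w)%O -> inc_mul itv (e u v) G u w = G v w.
Proof.
move=> Huv Hvw; rewrite /inc_mul; have [U M] := Hlf u w.
have Hv : v \in itv u w by rewrite M Huv Hvw.
rewrite (bigD1_seq v Hv U) /= /inc_e !eqxx /= mul1r big1 ?addr0 // => t Ht.
by rewrite /= (negbTE Ht) mul0r.
Qed.

Lemma e_mul_r (u v w : P) (G : P -> P -> R) :
  (u <= v)%O -> (v <= w)%O -> inc_mul itv G (e v w) u w = G u v.
Proof.
move=> Huv Hvw; rewrite /inc_mul; have [U M] := Hlf u w.
have Hv : v \in itv u w by rewrite M Huv Hvw.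
rewrite (bigD1_seq v Hv U) /= /inc_e !eqxx /= mulr1 big1 ?addr0 // => t Ht.
by rewrite (negbTE Ht) /= mulr0.
Qed.

Lemma e_mulE (u v w : P) : (u <= v)%O -> (v <= w)%O ->
  inc_mul itv (e u v) (e v w) = e u w.
Proof.
move=> Huv Hvw; apply: functional_extensionality => a;
  apply: functional_extensionality => c.
case: (boolP ((a == u) && (c == w))) => H.
  move/andP: H => [/eqP -> /eqP ->]; rewrite e_mul_l //.
  by rewrite /inc_e !eqxx.
rewrite /inc_mul [RHS]/inc_e (negbTE H) big1 // => t _; rewrite /inc_e.
move: H; case: (a == u); case: (t == v); case: (c == w) => //= _;
  by rewrite ?mulr0 ?mul0r.
Qed.

Lemma e_mul0 (u v : P) : u != v ->
  inc_mul itv (e u u) (e v v) = (fun _ _ => 0).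
Proof.
move=> Huv; apply: functional_extensionality => a;
  apply: functional_extensionality => c.
rewrite /inc_mul big1 // => t _; rewrite /inc_e.
case: (eqVneq t u) => [->|Htu].
  by rewrite (negbTE Huv) /= mulr0.
by rewrite ?(negbTE Htu) andbF mul0r.
Qed.

Lemma L3 (u a c : P) (G : P -> P -> R) : a != u -> inc_mul itv (e u u) G a c = 0.
Proof. by move=> Ha; rewrite /inc_mul big1 // => t _; rewrite /inc_e (negbTE Ha) /= mul0r. Qed.

Lemma L4 (u a c : P) (G : P -> P -> R) : c != u -> inc_mul itv G (e u u) a c = 0.
Proof. by move=> Hc; rewrite /inc_mul big1 // => t _; rewrite /inc_e (negbTE Hc) andbF mulr0. Qed.

Variables (b : (P -> P -> R) -> (P -> P -> R) -> (P -> P -> R))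
  (Hb : is_biderivation itv b).

Lemma b0l h a c : incidence h -> b (fun _ _ => 0) h a c = 0.
Proof.
move=> Ih; case: Hb => _ Hadd _ _ _.
have := Hadd _ _ _ inc0 inc0 Ih.
have -> : inc_add (fun _ _ : P => (0:R)) (fun _ _ => 0) = (fun _ _ => 0).
  by apply: functional_extensionality => ?; apply: functional_extensionality => ?;
     rewrite /inc_add addr0.
move=> H; have := f_equal (fun F => F a c) H; rewrite /inc_add => H2.
have : b (fun _ _ => 0) h a c + b (fun _ _ => 0) h a c - b (fun _ _ => 0) h a c
     = b (fun _ _ => 0) h a c - b (fun _ _ => 0) h a c by rewrite -H2.
by rewrite addrK subrr.
Qed.

Lemma b0r f a c : incidence f -> b f (fun _ _ => 0) a c = 0.
Proof.
move=> If; case: Hb => _ _ Hadd _ _.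
have := Hadd _ _ _ If inc0 inc0.
have -> : inc_add (fun _ _ : P => (0:R)) (fun _ _ => 0) = (fun _ _ => 0).
  by apply: functional_extensionality => ?; apply: functional_extensionality => ?;
     rewrite /inc_add addr0.
move=> H; have := f_equal (fun F => F a c) H; rewrite /inc_add => H2.
have : b f (fun _ _ => 0) a c + b f (fun _ _ => 0) a c - b f (fun _ _ => 0) a c
     = b f (fun _ _ => 0) a c - b f (fun _ _ => 0) a c by rewrite -H2.
by rewrite addrK subrr.
Qed.

Lemma first_split u v w h : (u <= v)%O -> (v <= w)%O -> incidence h ->
  b (e u w) h u w = b (e v w) h v w + b (e u v) h u v.
Proof.
move=> Huv Hvw Ih; case: Hb => _ _ _ Hl _.
have := Hl _ _ _ (inc_e_inc Huv) (inc_e_inc Hvw) Ih.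
rewrite e_mulE // => H; rewrite H /inc_add e_mul_l // e_mul_r //.
Qed.

Lemma second_split u v w f : (u <= v)%O -> (v <= w)%O -> incidence f ->
  b f (e u w) u w = b f (e v w) v w + b f (e u v) u v.
Proof.
move=> Huv Hvw If; case: Hb => _ _ _ _ Hr.
have := Hr _ _ _ If (inc_e_inc Huv) (inc_e_inc Hvw).
rewrite e_mulE // => H; rewrite H /inc_add e_mul_l // e_mul_r //.
Qed.

Lemma vanish1 h w u v : u != w -> v != w -> incidence h -> b (e w w) h u v = 0.
Proof.
move=> Hu Hv Ih; case: Hb => _ _ _ Hl _.
have Iw := inc_e_inc (lexx w).
have := Hl _ _ _ Iw Iw Ih; rewrite e_mulE // => H.
by rewrite H /inc_add L3 // L4 // addr0.
Qed.

Lemma vanish2 f w u v : u != w -> v != w -> incidence f -> b f (e w w) u v = 0.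
Proof.
move=> Hu Hv If; case: Hb => _ _ _ _ Hr.
have Iw := inc_e_inc (lexx w).
have := Hr _ _ _ If Iw Iw; rewrite e_mulE // => H.
by rewrite H /inc_add L3 // L4 // addr0.
Qed.

Lemma sum1 h u v : (u < v)%O -> incidence h ->
  b (e u u) h u v + b (e v v) h u v = 0.
Proof.
move=> Huv Ih; case: Hb => _ _ _ Hl _.
have := Hl _ _ _ (inc_e_inc (lexx u)) (inc_e_inc (lexx v)) Ih.
rewrite e_mul0 ?(lt_eqF Huv) // => H.
have := f_equal (fun F => F u v) H; rewrite b0l // /inc_add.
rewrite e_mul_l ?lexx ?(ltW Huv) // e_mul_r ?lexx ?(ltW Huv) // => ->.
by rewrite addrC.
Qed.

Lemma sum2 f u v : (u < v)%O -> incidence f ->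
  b f (e u u) u v + b f (e v v) u v = 0.
Proof.
move=> Huv If; case: Hb => _ _ _ _ Hr.
have := Hr _ _ _ If (inc_e_inc (lexx u)) (inc_e_inc (lexx v)).
rewrite e_mul0 ?(lt_eqF Huv) // => H.
have := f_equal (fun F => F u v) H; rewrite b0r // /inc_add.
rewrite e_mul_l ?lexx ?(ltW Huv) // e_mul_r ?lexx ?(ltW Huv) // => ->.
by rewrite addrC.
Qed.

End Aux.

Theorem mainTheorem14 (d : Order.disp_t) (P : porderType d) (R : comNzRingType)
  (itv : P -> P -> seq P) (Hlf : locally_finite_enum itv)
  (b : (P -> P -> R) -> (P -> P -> R) -> (P -> P -> R))
  (Hb : is_biderivation itv b) (x y z : P)
  (Hxy : (x < y)%O) (Hyz : (y < z)%O) :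
  (b (@inc_e _ _ R x y) (@inc_e _ _ R x x) x y = b (@inc_e _ _ R y z) (@inc_e _ _ R y y) y z /\
   b (@inc_e _ _ R y z) (@inc_e _ _ R y y) y z = b (@inc_e _ _ R x z) (@inc_e _ _ R x x) x z) /\
  (b (@inc_e _ _ R x x) (@inc_e _ _ R x y) x y = b (@inc_e _ _ R y y) (@inc_e _ _ R y z) y z /\
   b (@inc_e _ _ R y y) (@inc_e _ _ R y z) y z = b (@inc_e _ _ R x x) (@inc_e _ _ R x z) x z).
Proof.
have Hxz := lt_trans Hxy Hyz.
have lxy := ltW Hxy; have lyz := ltW Hyz.
have nyx : y != x by rewrite gt_eqF.
have nzx : z != x by rewrite gt_eqF.
have nxy : x != y by rewrite lt_eqF.
have nzy : z != y by rewrite gt_eqF.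
have I := @inc_e_inc d P R.
have s1 := first_split Hlf Hb lxy lyz (I _ _ (lexx x)).
have s2 := vanish2 Hlf Hb nyx nzx (I _ _ lyz).
have s3 := first_split Hlf Hb lxy lyz (I _ _ (lexx y)).
have s3' := vanish2 Hlf Hb nxy nzy (I _ _ (ltW Hxz)).
have s4 := sum2 Hlf Hb Hxy (I _ _ lxy).
have t1 := second_split Hlf Hb lxy lyz (I _ _ (lexx x)).
have t2 := vanish1 Hlf Hb nyx nzx (I _ _ lyz).
have t3 := second_split Hlf Hb lxy lyz (I _ _ (lexx y)).
have t3' := vanish1 Hlf Hb nxy nzy (I _ _ (ltW Hxz)).
have t4 := sum1 Hlf Hb Hxy (I _ _ lxy).
rewrite s3' in s3; rewrite s2 add0r in s1; rewrite t3' in t3; rewrite t2 add0r in t1.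
have key : forall A B C : R, A + C = 0 -> 0 = B + C -> A = B.
  move=> A B C h1 h2; apply/eqP; rewrite -subr_eq0.
  have -> : A - B = (A + C) - (B + C) by ring.
  by rewrite h1 -h2 subrr.
rewrite s1 t1; split; split.
- exact: key s4 s3.
- by symmetry; exact: key s4 s3.
- exact: key t4 t3.
- by symmetry; exact: key t4 t3.
Qed.
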